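(* Let $R$ be a commutative unital ring, and in the category $\mathfrak{FdgMod}_R$ of filtered cochain complexes of $R$-modules let $I=\{S_R(n+1,p)\to D_R(n,p)\}_{n\in\mathbb Z,p\in\mathbb N}$, $J=\{0\to D_R(n,p)\}_{n\in\mathbb Z,p\in\mathbb N}$ and $W=\{f:(M,F)\to(N,F) : H^n(F^pf)\text{ iso for all }n,p\}$. Then $J\text{-cof}\subseteq W\cap I\text{-cof}$.
   Context: Filtered cochain complexes $(M,F)$: complexes of $R$-modules with decreasing filtrations by subcomplexes $F^kM$, $k\in\mathbb N$, $F^0M=M$; morphisms preserve filtrations. $D_R(n)$: $R$ in degrees $n,n+1$ with identity differential; $S_R(n)$: $R$ in degree $n$; $D_R(n,p)$, $S_R(n,p)$: filtered with $F^k$ the whole complex for $k\le p$ and $0$ for $k>p$. For a class of maps $K$: $K$-inj is the class of maps with the right lifting property with respect to all maps in $K$; $K$-cof is the class of maps with the left lifting property with respect to all maps in $K$-inj. *)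

(* Defs.v *)
From HB Require Import structures.
From mathcomp Require Import all_boot all_order all_algebra.
Unset Printing Implicit Defensive.
Import Order.TTheory GRing.Theory Num.Theory.
Local Open Scope ring_scope.

Record fcomplex (R : comPzRingType) := FComplex {
  cx : int -> lmodType R;
  dif : forall n : int, cx n -> cx (n + 1);
  dif_lin : forall n a (x y : cx n), dif n (a *: x + y) = a *: dif n x + dif n y;
  dif2 : forall n (x : cx n), dif (n + 1) (dif n x) = 0;
  fil : nat -> forall n : int, pred (cx n);
  fil_0 : forall n (x : cx n), fil 0 n x;
  fil_decr : forall p n (x : cx n), fil p.+1 n x -> fil p n x;
  fil_zero : forall p n, fil p n 0;
  fil_add : forall p n (x y : cx n), fil p n x -> fil p n y -> fil p n (x + y);
  fil_scale : forall p n a (x : cx n), fil p n x -> fil p n (a *: x);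
  fil_dif : forall p n (x : cx n), fil p n x -> fil p (n + 1) (dif n x)
}.

Arguments cx {R}.
Arguments dif {R}.
Arguments fil {R}.

Record fhom (R : comPzRingType) (M N : fcomplex R) := FHom {
  hom : forall n : int, cx M n -> cx N n;
  hom_lin : forall n a (x y : cx M n), hom n (a *: x + y) = a *: hom n x + hom n y;
  hom_dif : forall n (x : cx M n), hom (n + 1) (dif M n x) = dif N n (hom n x);
  hom_fil : forall p n (x : cx M n), fil M p n x -> fil N p n (hom n x)
}.

Arguments fhom {R}.
Arguments hom {R M N}.
Set Implicit Arguments. Unset Strict Implicit.

(** H^(n+1)(F^p f) is an isomorphism (every degree is of the form n+1, n : int).
    Cycles Z = {z in F^p M^(n+1) | d z = 0}, boundaries B = d(F^p M^n);
    the induced map Z/B -> Z'/B', [z] |-> [f z], is injective and surjective. *)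
Definition Hiso (R : comPzRingType) (M N : fcomplex R) (f : fhom M N)
    (p : nat) (n : int) : Prop :=
  (forall z : cx M (n + 1), fil M p (n + 1) z -> dif M (n + 1) z = 0 ->
     (exists2 w' : cx N n, fil N p n w' & hom f (n + 1) z = dif N n w') ->
     exists2 w : cx M n, fil M p n w & z = dif M n w)
  /\
  (forall z' : cx N (n + 1), fil N p (n + 1) z' -> dif N (n + 1) z' = 0 ->
     exists z : cx M (n + 1), [/\ fil M p (n + 1) z, dif M (n + 1) z = 0 &
       exists2 w' : cx N n, fil N p n w' & hom f (n + 1) z = z' + dif N n w']).

Arguments Hiso {R M N}.

Definition W (R : comPzRingType) (M N : fcomplex R) (f : fhom M N) : Prop :=
  forall (n : int) (p : nat), Hiso f p n.

Definition lifts (R : comPzRingType) (A B X Y : fcomplex R)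
    (i : fhom A B) (q : fhom X Y) : Prop :=
  forall (u : fhom A X) (v : fhom B Y),
    (forall n x, hom q n (hom u n x) = hom v n (hom i n x)) ->
    exists h : fhom B X,
      (forall n x, hom h n (hom i n x) = hom u n x) /\
      (forall n x, hom q n (hom h n x) = hom v n x).

Definition mapfam (R : comPzRingType) :=
  int -> nat -> {A : fcomplex R & {B : fcomplex R & fhom A B}}.

Definition fam_map (R : comPzRingType) (K : mapfam R) n p :=
  projT2 (projT2 (K n p)).

Definition Kinj (R : comPzRingType) (K : mapfam R) (X Y : fcomplex R)
    (q : fhom X Y) : Prop :=
  forall n p, lifts (fam_map K n p) q.

Definition Kcof (R : comPzRingType) (K : mapfam R) (A B : fcomplex R)
    (i : fhom A B) : Prop :=
  forall (X Y : fcomplex R) (q : fhom X Y), Kinj K q -> lifts i q.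

Section MxComplex.
Variable R : comPzRingType.
Variable dim : int -> nat.
Variable A : forall k : int, 'M[R]_(dim (k + 1), dim k).
Hypothesis HA : forall k, A (k + 1) *m A k = 0.
Variable p : nat.

Definition mxfil (q : nat) (k : int) : pred 'cV[R]_(dim k) :=
  fun x => (q <= p)%N || (x == 0).

Definition mxcomplex : fcomplex R.
Proof.
refine (@FComplex R (fun k => 'cV[R]_(dim k)) (fun k x => A k *m x) _ _ mxfil
          _ _ _ _ _ _).
- by move=> n a x y; rewrite mulmxDr scalemxAr.
- by move=> n x; rewrite mulmxA HA mul0mx.
- by move=> n x; rewrite /mxfil leq0n.
- by move=> q n x; rewrite /mxfil => /orP [H|->]; rewrite ?orbT // ltnW.
- by move=> q n; rewrite /mxfil eqxx orbT.
- move=> q n x y; rewrite /mxfil.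
  by case: (q <= p)%N => //= /eqP -> /eqP ->; rewrite addr0.
- move=> q n a x; rewrite /mxfil.
  by case: (q <= p)%N => //= /eqP ->; rewrite scaler0.
- move=> q n x; rewrite /mxfil.
  by case: (q <= p)%N => //= /eqP ->; rewrite mulmx0.
Defined.
End MxComplex.

Section MxHom.
Variable R : comPzRingType.
Variables (dim1 dim2 : int -> nat).
Variable A1 : forall k : int, 'M[R]_(dim1 (k + 1), dim1 k).
Variable A2 : forall k : int, 'M[R]_(dim2 (k + 1), dim2 k).
Hypothesis HA1 : forall k, A1 (k + 1) *m A1 k = 0.
Hypothesis HA2 : forall k, A2 (k + 1) *m A2 k = 0.
Variables (p1 p2 : nat).
Hypothesis Hp : (p1 <= p2)%N.
Variable B : forall k : int, 'M[R]_(dim2 k, dim1 k).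
Hypothesis HB : forall k, B (k + 1) *m A1 k = A2 k *m B k.

Definition mxhom : fhom (mxcomplex HA1 p1) (mxcomplex HA2 p2).
Proof.
refine (@FHom R (mxcomplex HA1 p1) (mxcomplex HA2 p2)
          (fun k (x : 'cV[R]_(dim1 k)) => B k *m x) _ _ _).
- by move=> n a x y; rewrite /= mulmxDr scalemxAr.
- by move=> n x; rewrite /= mulmxA HB mulmxA.
- move=> q n x; rewrite /= /mxfil => /orP [H|/eqP ->].
    by rewrite (leq_trans H Hp).
  by rewrite mulmx0 eqxx orbT.
Defined.
End MxHom.

Section Concrete.
Variable R : comPzRingType.

(* D_R(n, p): R in degrees n and n+1, identity differential. *)
Definition dimD (n k : int) : nat := ((k == n) || (k == n + 1))%B.
Definition AD (n k : int) : 'M[R]_(dimD n (k + 1), dimD n k) :=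
  \matrix_(i, j) (if k == n then 1 else 0).

Lemma AD2 n k : AD n (k + 1) *m AD n k = 0.
Proof.
apply/matrixP => i j; rewrite !mxE big1 // => l _; rewrite !mxE.
have [->|] := eqVneq k n.
  have -> : (n + 1 == n) = false.
    by apply/negbTE; rewrite -subr_eq0 addrAC subrr add0r oner_eq0.
  by rewrite mul0r.
by rewrite mulr0.
Qed.

Definition D_R (n : int) (p : nat) : fcomplex R := mxcomplex (@AD2 n) p.

(* S_R(n, p): R in degree n, zero differential. *)
Definition dimS (n k : int) : nat := (k == n).
Definition AS (n k : int) : 'M[R]_(dimS n (k + 1), dimS n k) := 0.
Lemma AS2 n k : AS n (k + 1) *m AS n k = 0.
Proof. by rewrite mulmx0. Qed.

Definition S_R (n : int) (p : nat) : fcomplex R := mxcomplex (@AS2 n) p.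

Definition A0 (k : int) : 'M[R]_(0, 0) := 0.
Lemma A02 k : A0 (k + 1) *m A0 k = 0.
Proof. by rewrite mulmx0. Qed.
Definition zero_cx : fcomplex R := mxcomplex (dim := fun _ => 0%N) A02 0.

(* The canonical inclusion S_R(n+1, p) -> D_R(n, p) (identity in degree n+1). *)
Definition Bincl (n k : int) : 'M[R]_(dimD n k, dimS (n + 1) k) :=
  \matrix_(i, j) 1.

Lemma Bincl_comm n k :
  Bincl n (k + 1) *m AS (n + 1) k = AD n k *m Bincl n k.
Proof.
rewrite mulmx0; apply/matrixP => i j; rewrite !mxE.
have Hk : k == n + 1.
  have H := leq_ltn_trans (leq0n j) (ltn_ord j).
  by move: H; rewrite /dimS lt0b.
have Hkn : (k == n) = false.
  rewrite (eqP Hk).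
  by apply/negbTE; rewrite -subr_eq0 addrAC subrr add0r oner_eq0.
by rewrite big1 // => l _; rewrite !mxE Hkn mul0r.
Qed.

Definition incl_SD (n : int) (p : nat) : fhom (S_R (n + 1) p) (D_R n p) :=
  mxhom (@AS2 (n + 1)) (@AD2 n) (leqnn p) (@Bincl_comm n).

Definition Bzero (n k : int) : 'M[R]_(dimD n k, 0) := 0.
Lemma Bzero_comm n k : Bzero n (k + 1) *m A0 k = AD n k *m Bzero n k.
Proof. by rewrite !mulmx0. Qed.

Definition zero_D (n : int) (p : nat) : fhom zero_cx (D_R n p) :=
  mxhom A02 (@AD2 n) (leq0n p) (@Bzero_comm n).

Definition Ifam : mapfam R := fun n p =>
  existT _ (S_R (n + 1) p) (existT _ (D_R n p) (incl_SD n p)).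
Definition Jfam : mapfam R := fun n p =>
  existT _ zero_cx (existT _ (D_R n p) (zero_D n p)).
End Concrete.

(* Main.v *)
Require Import Defs.
From HB Require Import structures.
From mathcomp Require Import all_boot all_order all_algebra.
From mathcomp Require Import zify.
Require Import Defs.
Import Order.TTheory GRing.Theory Num.Theory.
Unset Printing Implicit Defensive.
Local Open Scope ring_scope.
Arguments fil_decr {R f p n x}. Arguments fil_add {R f p n x y}.
Arguments dif_lin {R f n}. Arguments hom_lin {R M N f n}.
Arguments hom_dif {R M N f n}. Arguments hom_fil {R M N f p n x}.
Arguments fil_dif {R f p n x}. Arguments dif2 {R f n}.
Arguments fil_zero {R f p n}. Arguments fil_scale {R f p n} a {x}.
Arguments fil_0 {R f n}.

Section Lin.
Variables (R : comPzRingType) (U V : lmodType R) (f : U -> V).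
Hypothesis Hf : forall a x y, f (a *: x + y) = a *: f x + f y.
Lemma lin0 : f 0 = 0.
Proof.
have h := Hf 1 0 0; rewrite scale1r addr0 scale1r in h.
by apply: (addrI (f 0)); rewrite addr0 -h.
Qed.
Lemma linD x y : f (x + y) = f x + f y.
Proof. by have := Hf 1 x y; rewrite !scale1r. Qed.
Lemma linZ a x : f (a *: x) = a *: f x.
Proof. by have := Hf a x 0; rewrite !addr0 lin0 addr0. Qed.
Lemma linN x : f (- x) = - f x.
Proof. by rewrite -scaleN1r linZ scaleN1r. Qed.
Lemma linB x y : f (x - y) = f x - f y.
Proof. by rewrite linD linN. Qed.
Lemma linS (I : finType) (c : I -> R) (g : I -> U) :
  f (\sum_i c i *: g i) = \sum_i c i *: f (g i).
Proof.
apply: (big_ind2 (fun a b => f a = b)); first exact: lin0.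
  by move=> a b a' b' ha hb; rewrite linD ha hb.
by move=> i _; rewrite linZ.
Qed.
End Lin.
Arguments lin0 {R U V f}. Arguments linD {R U V f} Hf x y.
Arguments linZ {R U V f} Hf a x. Arguments linN {R U V f} Hf x.
Arguments linB {R U V f} Hf x y. Arguments linS {R U V f} Hf {I} c g.

Section Gen.
Variable R : comPzRingType.

Lemma difL (M : fcomplex R) n : forall a x y,
  dif M n (a *: x + y) = a *: dif M n x + dif M n y.
Proof. exact: dif_lin. Qed.
Lemma homL (M N : fcomplex R) (f : fhom M N) n : forall a x y,
  hom f n (a *: x + y) = a *: hom f n x + hom f n y.
Proof. exact: hom_lin. Qed.

Lemma fil_le (M : fcomplex R) p q n x : (q <= p)%N -> fil M p n x -> fil M q n x.
Proof.
move=> hq; elim: p hq x => [|p IH] hq x hx.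
  by move: hq; rewrite leqn0 => /eqP ->.
move: hq; rewrite leq_eqVlt => /orP [/eqP -> //|]; rewrite ltnS => hq.
exact: (IH hq x (fil_decr hx)).
Qed.

Lemma fil_sum (M : fcomplex R) p n (I : finType) (c : I -> R) (g : I -> cx M n) :
  (forall i, fil M p n (g i)) -> fil M p n (\sum_i c i *: g i).
Proof.
move=> hg; apply: (big_ind (fil M p n)); first exact: fil_zero.
  by move=> a b; apply: fil_add.
by move=> i _; apply: fil_scale.
Qed.

Definition tr (M : fcomplex R) (m k : int) (e : m = k) (x : cx M m) : cx M k :=
  eq_rect m (fun i => (cx M i : Type)) x k e.
Arguments tr {M m k}.

Lemma tr_id (M : fcomplex R) m (e : m = m) x : tr e x = x :> cx M m.
Proof. by rewrite (eq_irrelevance e erefl). Qed.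
Lemma tr_tr (M : fcomplex R) m k l (e1 : m = k) (e2 : k = l) (x : cx M m) :
  tr e2 (tr e1 x) = tr (etrans e1 e2) x.
Proof. by case: l / e2; case: k / e1. Qed.
Lemma tr_lin (M : fcomplex R) m k (e : m = k) a (x y : cx M m) :
  tr e (a *: x + y) = a *: tr e x + tr e y.
Proof. by case: k / e. Qed.
Lemma tr_dif (M : fcomplex R) m k (e : m = k) (x : cx M m) :
  dif M k (tr e x) = tr (congr1 (fun i => i + 1) e) (dif M m x).
Proof. by case: k / e. Qed.
Lemma tr_fil (M : fcomplex R) p m k (e : m = k) (x : cx M m) :
  fil M p m x -> fil M p k (tr e x).
Proof. by case: k / e. Qed.
Lemma tr0 (M : fcomplex R) m k (e : m = k) : tr e (0 : cx M m) = 0.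
Proof. by case: k / e. Qed.
Lemma tr_inj (M : fcomplex R) m k (e : m = k) (x y : cx M m) : tr e x = tr e y -> x = y.
Proof. by case: k / e. Qed.
Lemma tr_hom (M N : fcomplex R) (f : fhom M N) m k (e : m = k) (x : cx M m) :
  hom f k (tr e x) = tr e (hom f m x).
Proof. by case: k / e. Qed.

Section MxMap.
Variable dim : int -> nat.
Variable A : forall k : int, 'M[R]_(dim (k + 1), dim k).
Hypothesis HA : forall k, A (k + 1) *m A k = 0.
Variable p : nat.
Variable X : fcomplex R.
Variable g : forall k, 'I_(dim k) -> cx X k.
Hypothesis Hfil : forall k (j : 'I_(dim k)), fil X p k (g k j).
Hypothesis Hd : forall k (j : 'I_(dim k)), dif X k (g k j) = \sum_i A k i j *: g (k + 1) i.

Definition mxmap : fhom (mxcomplex HA p) X.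
Proof.
refine (@FHom R (mxcomplex HA p) X
          (fun k (v : 'cV[R]_(dim k)) => \sum_j v j 0 *: g k j) _ _ _).
- move=> n a x y /=.
  rewrite scaler_sumr -big_split /=; apply: eq_bigr => j _.
  by rewrite !mxE scalerDl scalerA.
- move=> n x /=.
  rewrite (linS (@difL X n)).
  under [RHS]eq_bigr => j _ do rewrite Hd scaler_sumr.
  rewrite exchange_big /=; apply: eq_bigr => i _.
  rewrite mxE scaler_suml; apply: eq_bigr => j _.
  by rewrite scalerA mulrC.
- move=> q n x /=; rewrite /mxfil => /orP [hq|/eqP ->].
    by apply: fil_sum => j; apply: fil_le hq (Hfil _ _).
  rewrite big1; first exact: fil_zero.
  by move=> j _; rewrite mxE scale0r.
Defined.

Lemma mxmapE k v : hom mxmap k v = \sum_j v j 0 *: g k j.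
Proof. by []. Qed.
End MxMap.

End Gen.
Arguments tr {R M m k}.
Arguments mxmap {R dim A} HA {p X} g Hfil Hd.

Section Main.
Variable R : comPzRingType.

Lemma ord_empty d (j : 'I_d) : d = 0%N -> False.
Proof. by case: d j => [[]|]. Qed.

Lemma delta_const d (j : 'I_d) : (d <= 1)%N ->
  delta_mx j (0 : 'I_1) = const_mx (1 : R) :> 'cV[R]_d.
Proof.
move=> hd; apply/matrixP => i c; rewrite !mxE.
have -> : i = j by apply/val_inj; move: (ltn_ord i) (ltn_ord j) hd => /=; lia.
by rewrite !ord1 !eqxx.
Qed.

Lemma n1_neq (n : int) : (n + 1 == n) = false.
Proof. by apply/negbTE; rewrite -subr_eq0 addrAC subrr add0r oner_eq0. Qed.
Lemma dimD_n n : dimD n n = 1%N.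
Proof. by rewrite /dimD eqxx. Qed.
Lemma dimD_n1 n : dimD n (n + 1) = 1%N.
Proof. by rewrite /dimD eqxx orbT. Qed.
Lemma dimS_n n : dimS n n = 1%N.
Proof. by rewrite /dimS eqxx. Qed.

Lemma AD_const n : AD R n n *m (const_mx 1 : 'cV[R]_(dimD n n)) = const_mx 1.
Proof.
apply/matrixP => i c; rewrite !mxE.
under eq_bigr => j _ do rewrite /AD !mxE eqxx mul1r.
by rewrite sumr_const card_ord dimD_n.
Qed.

Lemma Bincl_const n :
  Bincl R n (n + 1) *m (const_mx 1 : 'cV[R]_(dimS (n + 1) (n + 1))) = const_mx 1.
Proof.
apply/matrixP => i c; rewrite !mxE.
under eq_bigr => j _ do rewrite /Bincl !mxE mul1r.
by rewrite sumr_const card_ord dimS_n.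
Qed.

Section GenD.
Variable X : fcomplex R.
Variables (n : int) (p : nat) (x : cx X n).
Hypothesis hx : fil X p n x.

Definition genD (k : int) : cx X k :=
  match k =P n with
  | ReflectT e => tr (esym e) x
  | ReflectF _ => match k =P n + 1 with
                  | ReflectT e => tr (esym e) (dif X n x)
                  | ReflectF _ => 0
                  end
  end.

Lemma genD_n : genD n = x.
Proof. by rewrite /genD; case: eqP => // e; rewrite tr_id. Qed.
Lemma genD_n1 : genD (n + 1) = dif X n x.
Proof.
rewrite /genD; case: eqP => [e|_]; first by exfalso; move: (n1_neq n); rewrite {1}e eqxx.
by case: eqP => // e; rewrite tr_id.
Qed.
Lemma genD_o k : k != n -> k != n + 1 -> genD k = 0.
Proof.
move=> h1 h2; rewrite /genD; case: eqP => [e|_]; first by exfalso; apply: (negP h1); apply/eqP.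
by case: eqP => [e|_] //; exfalso; apply: (negP h2); apply/eqP.
Qed.

Lemma genD_fil k : fil X p k (genD k).
Proof.
case: (eqVneq k n) => [->|h1]; first by rewrite genD_n.
case: (eqVneq k (n + 1)) => [->|h2]; first by rewrite genD_n1; apply: fil_dif.
by rewrite genD_o //; apply: fil_zero.
Qed.

Lemma genD_d k (j : 'I_(dimD n k)) :
  dif X k (genD k) = \sum_i AD R n k i j *: genD (k + 1).
Proof.
case: (eqVneq k n) => [e|h1].
  subst k; rewrite genD_n genD_n1.
  under eq_bigr => i _ do rewrite /AD !mxE eqxx scale1r.
  by rewrite sumr_const card_ord dimD_n1.
case: (eqVneq k (n + 1)) => [e|h2].
  subst k; rewrite genD_n1 dif2 big1 // => i _.
  by rewrite /AD !mxE n1_neq scale0r.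
have hd : dimD n k = 0%N by rewrite /dimD (negbTE h1) (negbTE h2).
by case: (ord_empty _ j hd).
Qed.

Definition Dmap : fhom (D_R R n p) X :=
  mxmap (@AD2 R n) (fun k _ => genD k) (fun k _ => genD_fil k) genD_d.
End GenD.

Section GenS.
Variable X : fcomplex R.
Variables (m : int) (p : nat) (z : cx X m).
Hypothesis hz : fil X p m z.
Hypothesis dz : dif X m z = 0.

Definition genS (k : int) : cx X k :=
  match k =P m with
  | ReflectT e => tr (esym e) z
  | ReflectF _ => 0
  end.

Lemma genS_m : genS m = z.
Proof. by rewrite /genS; case: eqP => // e; rewrite tr_id. Qed.
Lemma genS_o k : k != m -> genS k = 0.
Proof.
move=> h1; rewrite /genS; case: eqP => [e|_] //.
by exfalso; apply: (negP h1); apply/eqP.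
Qed.

Lemma genS_fil k : fil X p k (genS k).
Proof.
case: (eqVneq k m) => [->|h1]; first by rewrite genS_m.
by rewrite genS_o //; apply: fil_zero.
Qed.

Lemma genS_d k (j : 'I_(dimS m k)) :
  dif X k (genS k) = \sum_i AS R m k i j *: genS (k + 1).
Proof.
rewrite big1; last by move=> i _; rewrite /AS mxE scale0r.
case: (eqVneq k m) => [->|h1]; first by rewrite genS_m.
by rewrite genS_o // (lin0 (@difL R X k)).
Qed.

Definition Smap : fhom (S_R R m p) X :=
  mxmap (@AS2 R m) (fun k _ => genS k) (fun k _ => genS_fil k) genS_d.
End GenS.

Lemma col_decomp d (w : 'cV[R]_d) : w = \sum_j w j 0 *: delta_mx j 0.
Proof.
rewrite {1}(matrix_sum_delta w); apply: eq_bigr => i _.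
by rewrite big_ord1.
Qed.

Lemma surj_Jinj (X Y : fcomplex R) (q : fhom X Y) :
  (forall p n y, fil Y p n y -> exists2 x, fil X p n x & hom q n x = y) ->
  Kinj (Jfam R) q.
Proof.
move=> Hs n p; rewrite /lifts /fam_map /=; move=> u v Huv.
pose e := (const_mx 1 : 'cV[R]_(dimD n n)).
have fe : fil Y p n (hom v n e) by apply: hom_fil; rewrite /= /mxfil leqnn.
case: (Hs p n _ fe) => x hx qx.
exists (Dmap _ _ _ _ hx); split.
- move=> k w /=.
  have -> : w = 0 by apply/matrixP => [[]].
  rewrite (lin0 (@homL R _ _ u k)) mulmx0 big1 // => j _.
  by rewrite mxE scale0r.
- move=> k w /=.
  rewrite (linS (@homL R _ _ q k)) [in RHS](col_decomp _ w).
  rewrite (linS (@homL R _ _ v k)); apply: eq_bigr => j _; congr (_ *: _).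
  rewrite (delta_const _ j (leq_b1 _)).
  case: (eqVneq k n) => [ek|h1].
    by subst k; rewrite genD_n qx.
  case: (eqVneq k (n + 1)) => [ek|h2].
    subst k; rewrite genD_n1 hom_dif qx.
    have := @hom_dif R _ _ v n e; rewrite /= AD_const => <-.
    by [].
  have hd : dimD n k = 0%N by rewrite /dimD (negbTE h1) (negbTE h2).
  by case: (ord_empty _ j hd).
Qed.

Lemma Iinj_lift (X Y : fcomplex R) (q : fhom X Y) : Kinj (Ifam R) q ->
  forall p n (z : cx X (n + 1)) (y : cx Y n), fil X p (n + 1) z ->
  dif X (n + 1) z = 0 -> fil Y p n y -> hom q (n + 1) z = dif Y n y ->
  exists2 x, fil X p n x & (dif X n x = z /\ hom q n x = y).
Proof.
move=> HI p n z y hz dz hy hq.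
have := HI n p; rewrite /lifts /fam_map /= => L.
case: (L (Smap _ _ _ _ hz dz) (Dmap _ _ _ _ hy)).
  move=> k w /=.
  case: (eqVneq k (n + 1)) => [ek|h1].
    subst k; rewrite (linS (@homL R _ _ q (n + 1))) genS_m genD_n1 hq.
    rewrite -!scaler_suml; congr (_ *: _).
    under [RHS]eq_bigr => i _ do rewrite mxE.
    under [RHS]eq_bigr => i _ do under eq_bigr => j _ do rewrite /Bincl mxE mul1r.
    by rewrite sumr_const card_ord dimD_n1.
  have hd : dimS (n + 1) k = 0%N by rewrite /dimS (negbTE h1).
  have w0 : w = 0 by apply/matrixP => i; case: (ord_empty _ i hd).
  rewrite w0 mulmx0 !big1 ?(lin0 (@homL R _ _ q k)) // => i _; by rewrite mxE scale0r.
move=> h [hi hq'].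
pose e := (const_mx 1 : 'cV[R]_(dimD n n)).
exists (hom h n e); first by apply: hom_fil; rewrite /= /mxfil leqnn.
split.
  rewrite -hom_dif /= AD_const.
  have := hi (n + 1) (const_mx 1); rewrite /= Bincl_const => ->.
  under eq_bigr => j _ do rewrite mxE scale1r.
  by rewrite genS_m sumr_const card_ord dimS_n.
rewrite hq' /=.
under eq_bigr => j _ do rewrite mxE scale1r.
by rewrite genD_n sumr_const card_ord dimD_n.
Qed.

Lemma Iinj_surj (X Y : fcomplex R) (q : fhom X Y) : Kinj (Ifam R) q ->
  forall p n y, fil Y p n y -> exists2 x, fil X p n x & hom q n x = y.
Proof.
move=> HI p n y hy.
case: (Iinj_lift _ _ _ HI p (n + 1) 0 (dif Y n y) (@fil_zero R X p _) (lin0 (@difL R X _))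
        (fil_dif hy)).
  by rewrite (lin0 (@homL R _ _ q _)) dif2.
move=> x1 hx1 [dx1 qx1].
case: (Iinj_lift _ _ _ HI p n x1 y hx1 dx1 hy qx1) => x hx [_ qx].
by exists x.
Qed.

Lemma pairE (U V : lmodType R) (a : R) (u u' : U) (v v' : V) :
  a *: ((u, v) : (U * V)%type) + (u', v') = (a *: u + u', a *: v + v').
Proof. by []. Qed.
Lemma pair0 (U V : lmodType R) : (0 : (U * V)%type) = (0, 0).
Proof. by []. Qed.

Section Cyl.
Variables (A B : fcomplex R) (f : fhom A B).

Lemma em (n : int) : n = n + 1 - 1. Proof. by rewrite addrK. Qed.
Lemma ep (n : int) : n - 1 + 1 = n. Proof. by rewrite subrK. Qed.

Definition cxX (n : int) : lmodType R := (cx A n * (cx B n * cx B (n - 1)))%type.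
Definition difX (n : int) (t : cxX n) : cxX (n + 1) :=
  (dif A n t.1, (0, tr (em n) t.2.1)).
Definition filX (p : nat) (n : int) : pred (cxX n) :=
  fun t => [&& fil A p n t.1, fil B p n t.2.1 & fil B p (n - 1) t.2.2].

Definition Xc : fcomplex R.
Proof.
refine (@FComplex R cxX difX _ _ filX _ _ _ _ _ _).
- move=> n a x y; rewrite /difX /= dif_lin tr_lin.
transitivity ((a *: dif A n x.1 + dif A n y.1, (a *: (0 : cx B (n + 1)) + 0, a *: tr (em n) x.2.1 + tr (em n) y.2.1)) : cxX (n + 1)); last by [].
by rewrite scaler0 addr0.
- by move=> n x; rewrite /difX /= dif2 tr0.
- by move=> n x; rewrite /filX !fil_0.
- by move=> p n x /and3P [h1 h2 h3]; apply/and3P; split; apply: fil_decr.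
- by move=> p n; rewrite /filX !fil_zero.
- move=> p n x y /and3P [h1 h2 h3] /and3P [h1' h2' h3'].
  by apply/and3P; split; apply: fil_add.
- by move=> p n a x /and3P [h1 h2 h3]; apply/and3P; split; apply: fil_scale.
- move=> p n x /and3P [h1 h2 h3]; apply/and3P; split.
  + exact: fil_dif.
  + exact: fil_zero.
  + exact: tr_fil.
Defined.

Definition qX : fhom Xc B.
Proof.
refine (@FHom R Xc B (fun n (t : cxX n) =>
  hom f n t.1 + t.2.1 + tr (ep n) (dif B (n - 1) t.2.2)) _ _ _).
- move=> n a x y /=; rewrite hom_lin dif_lin tr_lin !scalerDr.
  by rewrite [X in X + _ = _]addrACA [LHS]addrACA.
- move=> n x /=; rewrite hom_dif addr0 tr_dif tr_tr tr_id.
  rewrite (linD (@difL R B n)) (linD (@difL R B n)) tr_dif dif2 tr0 addr0 //.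
- move=> p n x /and3P [h1 h2 h3] /=.
  apply: fil_add; first (apply: fil_add; [exact: hom_fil|exact: h2]).
  apply: tr_fil; exact: fil_dif.
Defined.

Definition uX : fhom A Xc.
Proof.
refine (@FHom R A Xc (fun n (a : cx A n) => ((a, (0, 0)) : cxX n)) _ _ _).
- move=> n a x y; symmetry.
  transitivity ((a *: x + y, (a *: (0 : cx B n) + 0, a *: (0 : cx B (n - 1)) + 0)) : cxX n).
    by [].
  by rewrite !scaler0 !addr0.
- by move=> n x /=; rewrite /difX /= tr0.
- by move=> p n x h /=; rewrite /filX /= h !fil_zero.
Defined.

Definition idB : fhom B B.
Proof. by refine (@FHom R B B (fun n x => x) _ _ _). Defined.

Lemma qX_surj p n y : fil B p n y -> exists2 x, fil Xc p n x & hom qX n x = y.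
Proof.
move=> hy; exists ((0, (y, 0)) : cxX n).
  by rewrite /= /filX /= hy !fil_zero.
by rewrite /= (lin0 (@homL R _ _ f n)) (lin0 (@difL R B _)) tr0 add0r addr0.
Qed.
End Cyl.

End Main.

Theorem proposition1p23 (R : comPzRingType) (A B : fcomplex R) (f : fhom A B) :
  Kcof (Jfam R) f -> W f /\ Kcof (Ifam R) f.
Proof.
move=> HJ; split; last first.
  move=> X Y q HI; apply: HJ; apply: surj_Jinj; exact: Iinj_surj.
have Hq := surj_Jinj _ _ _ _ (qX_surj R A B f).
case: (HJ _ _ _ Hq (uX R A B) (idB R B)).
  move=> k a /=.
  by rewrite (lin0 (difL R B _)) tr0 !addr0.
move=> h [hu hq] n p; split.
  move=> z hz dz [w' hw' fz].
  have := hu (n + 1) z; rewrite /= fz hom_dif /= /difX => E.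
  have hf := hom_fil (f := h) hw'; move: hf; rewrite /= /filX => /and3P [h1 _ _].
  exists (hom h n w').1 => //.
  by case: E.
move=> z' hz' dz'.
have ht := hom_fil (f := h) hz'; move: ht; rewrite /= /filX => /and3P [h1 h2 h3].
have dt : difX R A B (n + 1) (hom h (n + 1) z') = 0.
  by rewrite -[LHS]/(dif (Xc R A B) _ _) -hom_dif dz' (lin0 (homL R _ _ h _)).
have qt := hq (n + 1) z'; rewrite /= in qt.
move: dt; rewrite /difX => dt.
have [d1 d2] : dif A (n + 1) (hom h (n + 1) z').1 = 0 /\
   tr (em (n + 1)) (hom h (n + 1) z').2.1 = 0 by case: dt.
have t0 : (hom h (n + 1) z').2.1 = 0.
  by apply: (tr_inj R _ _ _ (em (n + 1))); rewrite d2 tr0.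
exists (hom h (n + 1) z').1; split => //.
exists (- tr (esym (em n)) (hom h (n + 1) z').2.2).
  by rewrite -scaleN1r fil_scale // tr_fil.
rewrite (linN (difL R B n)) tr_dif.
rewrite (eq_irrelevance (congr1 (fun i => i + 1) (esym (em n))) (ep (n + 1))).
rewrite t0 addr0 in qt.
set a := (hom h (n + 1) z').1 in qt *; set c := (hom h (n + 1) z').2.2 in qt *.
by rewrite -[in RHS]qt addrK.
Qed.
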